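(* Let $\mathcal{P}=\{\mathbb{P}_n\}_{n\ge1}$ and $\mathcal{P}'=\{\mathbb{P}'_n\}_{n\ge1}$ be families of probability measures, $\mathbb{P}_n,\mathbb{P}'_n$ on $\mathbb{R}^n$. If $\mathcal{P}'$ has exponential Fisher separability and $\mathcal{P}'$ dominates $\mathcal{P}$, then $\mathcal{P}$ has exponential Fisher separability.
   Context: $\mathcal{P}'$ dominates $\mathcal{P}$ if there is a constant $C$ such that $\mathbb{P}_n(S)\le C\,\mathbb{P}'_n(S)$ for all $n$ and all measurable $S\subset\mathbb{R}^n$. A family $\{\mathbb{P}_n\}$ has exponential Fisher separability if there exist constants $a>0$, $b\in(0,1)$ such that for all $n$, if $\boldsymbol{x},\boldsymbol{y}$ are i.i.d. with law $\mathbb{P}_n$, then $(\boldsymbol{x},\boldsymbol{x})>(\boldsymbol{x},\boldsymbol{y})$ with probability at least $1-ab^n$ ($(\cdot,\cdot)$ the Euclidean inner product). *)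

(* Defs.v *)
(* R^n is modelled as n.-tuple R with its library
   product sigma-algebra (generated by the coordinate projections), which is
   the Borel sigma-algebra of R^n. *)
From HB Require Import structures.
From mathcomp Require Import all_boot all_order all_algebra.
From mathcomp Require Import all_classical all_reals all_analysis.
Set Implicit Arguments. Unset Strict Implicit. Unset Printing Implicit Defensive.
Import Order.TTheory GRing.Theory Num.Theory.
Local Open Scope classical_set_scope.
Local Open Scope ring_scope.

Definition dotp (R : realType) (n : nat) (x y : n.-tuple R) : R :=
  \sum_(i < n) tnth x i * tnth y i.

Definition fisher_event (R : realType) (n : nat) : set (n.-tuple R * n.-tuple R) :=
  [set z | dotp z.1 z.2 < dotp z.1 z.1].

(* a family {P_n}_{n>=1} of probability measures on R^n (entries for n = 0 ignored) *)
Definition prob_family (R : realType) := forall n : nat, probability (n.-tuple R) R.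

Definition dominates (R : realType) (P' P : prob_family R) : Prop :=
  exists C : R, forall n : nat, (0 < n)%N ->
    forall S : set (n.-tuple R), measurable S ->
      (P n S <= C%:E * P' n S)%E.

(* exponential Fisher separability: x, y i.i.d. with law P_n, i.e. (x,y) has
   law the product measure P_n \x P_n *)
Definition exp_fisher_separable (R : realType) (P : prob_family R) : Prop :=
  exists a b : R, 0 < a /\ 0 < b < 1 /\
    forall n : nat, (0 < n)%N ->
      ((1 - a * b ^+ n)%:E <= (P n \x P n) (@fisher_event R n))%E.

(* Main.v *)
Require Import Defs.
From HB Require Import structures.
From mathcomp Require Import all_boot all_order all_algebra.
From mathcomp Require Import all_classical all_reals all_analysis.
From mathcomp Require Import measurable_realfun.
Import Order.TTheory GRing.Theory Num.Theory.
Local Open Scope classical_set_scope.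
Local Open Scope ring_scope.

Lemma meas_dotp (R : realType) n (f g : n.-tuple R * n.-tuple R -> n.-tuple R) :
  measurable_fun setT f -> measurable_fun setT g ->
  measurable_fun setT (fun z => dotp (f z) (g z)).
Proof.
move=> mf mg; rewrite /dotp; apply: measurable_sum => i.
apply: measurable_funM.
  exact: (measurableT_comp (measurable_tnth i) mf).
exact: (measurableT_comp (measurable_tnth i) mg).
Qed.

Lemma meas_fisher (R : realType) n : measurable (@fisher_event R n).
Proof.
have mb : measurable_fun setT (fun z : n.-tuple R * n.-tuple R =>
   dotp z.1 z.2 < dotp z.1 z.1).
  apply: measurable_fun_ltr; apply: meas_dotp; first exact: measurable_fst;
    try exact: measurable_snd; exact: measurable_fst.
have := mb measurableT [set true] I; rewrite setTI.
by congr measurable; apply/seteqP; split => z /=.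
Qed.

Section dom.
Local Open Scope ereal_scope.
Context d (T : measurableType d) (R : realType).
Variables (m m' : probability T R) (C : R).
Hypothesis C0 : (0 <= C)%R.
Hypothesis h : forall S, measurable S -> m S <= C%:E * m' S.

Lemma prod12 (p q : probability T R) A : measurable A -> (p \x q) A = (p \x^ q) A.
Proof.
move=> mA; apply: product_measure_unique => // B1 B2 mB1 mB2.
exact: product_measure2E.
Qed.

Lemma dom_prod A : measurable A -> (m \x m) A <= (C * C)%:E * (m' \x m') A.
Proof.
move=> mA.
have step1 : (m \x m) A <= C%:E * (m' \x m) A.
  rewrite prod12 // (prod12 m' m) //.
  rewrite /product_measure2.
  rewrite -ge0_integralZl //; last exact: measurable_fun_ysection.
  apply: ge0_le_integral => //.
  - exact: measurable_fun_ysection.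
  - apply: measurable_funeM. exact: measurable_fun_ysection.
  - by move=> y _ /=; apply: h; exact: measurable_ysection.
have step2 : (m' \x m) A <= C%:E * (m' \x m') A.
  rewrite /product_measure1.
  rewrite -ge0_integralZl //; last exact: measurable_fun_xsection.
  apply: ge0_le_integral => //.
  - exact: measurable_fun_xsection.
  - apply: measurable_funeM. exact: measurable_fun_xsection.
  - by move=> y _ /=; apply: h; exact: measurable_xsection.
apply: (le_trans step1); rewrite EFinM -muleA lee_wpmul2l ?lee_fin //.
Qed.
End dom.

From mathcomp Require Import lra.
Lemma compl_bound d (T : measurableType d) (R : realType) (Q Q' : probability T R)
  (F : set T) (K t : R) : measurable F -> (0 <= K)%R ->
  (Q (~` F) <= K%:E * Q' (~` F))%E -> ((1 - t)%:E <= Q' F)%E ->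
  ((1 - K * t)%:E <= Q F)%E.
Proof.
move=> mF K0; rewrite !probability_setC //.
have fQ : Q F \is a fin_num by rewrite fin_num_measure.
have fQ' : Q' F \is a fin_num by rewrite fin_num_measure.
rewrite -(fineK fQ) -(fineK fQ').
set x := fine (Q F); set y := fine (Q' F).
rewrite -!EFinB -EFinM !lee_fin => h1 h2.
have : K * (1 - y) <= K * t by rewrite ler_wpM2l //; lra.
lra.
Qed.

Theorem theorem5 (R : realType) (P P' : prob_family R) :
  exp_fisher_separable P' -> dominates P' P -> exp_fisher_separable P.
Proof.
move=> [a [b [a0 [/andP[b0 b1] H]]]] [C HC].
have C0 : (0 <= C)%R.
  have := HC 1%N isT setT measurableT.
  rewrite !probability_setT mule1 lee_fin => /(le_trans _); apply; exact: ler01.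
exists (C * C * a + a), b; split.
  by apply: ltr_pwDr => //; rewrite !mulr_ge0 // ltW.
split; first by rewrite b0 b1.
move=> n n0.
have mF := @meas_fisher R n.
have := @compl_bound _ _ _ (P n \x P n)%E (P' n \x P' n)%E _ (C * C) (a * b ^+ n) mF (mulr_ge0 C0 C0)
  (@dom_prod _ _ _ (P n) (P' n) C C0 (HC n n0) _ (measurableC mF)) (H n n0).
apply: le_trans; rewrite lee_fin lerB // mulrA mulrDl lerDl.
by rewrite mulr_ge0 // ?exprn_ge0 // ltW.
Qed.
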